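(* For every positive integer $n$, there exists a constant $C_n\le 1$ such that $\prod_{i=1}^n x_i+C_n\in M_{2\lceil n/2\rceil}(g_1,\dots,g_n)$, where $g_i:=x_i(1-x_i)$ for $i=1,\dots,n$.
   Context: $\Sigma[\mathbf{x}]$ denotes the set of sums of squares of real polynomials in $\mathbf{x}=(x_1,\dots,x_n)$. For an integer $r$, the $r$-truncated quadratic module is $M_r(g_1,\dots,g_n):=\{\sigma_0+\sum_{i=1}^n\sigma_i g_i:\ \sigma_i\in\Sigma[\mathbf{x}],\ \deg\sigma_0\le r,\ \deg(\sigma_i g_i)\le r\}$. *)

(* Defs.v *)
From mathcomp Require Import all_boot all_order all_algebra.
From mathcomp Require Import reals.
From mathcomp Require Import mpoly.
Set Implicit Arguments. Unset Strict Implicit. Unset Printing Implicit Defensive.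
Import Order.TTheory GRing.Theory Num.Theory.
Local Open Scope ring_scope.

(* total degree of a multivariate polynomial (degree of 0 is taken as 0) *)
Definition tdeg (R : nzRingType) (n : nat) (p : {mpoly R[n]}) : nat :=
  (msize p).-1.

Definition is_sos (R : nzRingType) (n : nat) (p : {mpoly R[n]}) : Prop :=
  exists s : seq {mpoly R[n]}, p = \sum_(q <- s) q ^+ 2.

Definition trunc_qmodule (R : nzRingType) (n : nat) (r : nat)
  (g : 'I_n -> {mpoly R[n]}) (p : {mpoly R[n]}) : Prop :=
  exists (s0 : {mpoly R[n]}) (s : 'I_n -> {mpoly R[n]}),
    [/\ is_sos s0, (tdeg s0 <= r)%N,
        (forall i, is_sos (s i)),
        (forall i, tdeg (s i * g i) <= r)%N &
        p = s0 + \sum_(i < n) s i * g i].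

(* Main.v *)
Require Import Defs.
From mathcomp Require Import all_boot all_order all_algebra.
From mathcomp Require Import reals.
From mathcomp Require Import mpoly.
From mathcomp Require Import ring zify.
Import Order.TTheory GRing.Theory Num.Theory.
Local Open Scope ring_scope.

Section Aux.
Variables (R : realType) (n : nat).
Implicit Types (p q : {mpoly R[n]}).

Definition dle p (d : nat) := (msize p <= d.+1)%N.

Lemma dle_mono p a b : (a <= b)%N -> dle p a -> dle p b.
Proof. rewrite /dle => hab h; apply: leq_trans h _; lia. Qed.

Lemma dle_add p q d : dle p d -> dle q d -> dle (p + q) d.
Proof.
rewrite /dle => hp hq; apply: leq_trans (msizeD_le _ _) _.
by rewrite geq_max hp hq.
Qed.

Lemma dle_opp p d : dle p d -> dle (- p) d.
Proof. by rewrite /dle msizeN. Qed.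

Lemma dle_mul p q a b : dle p a -> dle q b -> dle (p * q) (a + b).
Proof.
rewrite /dle => hp hq.
have [->|nzp] := eqVneq p 0; first by rewrite mul0r msize0.
have [->|nzq] := eqVneq q 0; first by rewrite mulr0 msize0.
rewrite msizeM //; move: hp hq; set u := msize p; set v := msize q; lia.
Qed.

Lemma dle_C c : dle c%:MP_[n] 0.
Proof. by rewrite /dle msizeC; case: (c != 0). Qed.

Lemma dle_1 : dle 1 0.
Proof. by rewrite -mpolyC1 dle_C. Qed.

Lemma dle_X (i : 'I_n) : dle 'X_i 1.
Proof. by rewrite /dle msizeX mdeg1. Qed.

Lemma dle_exp2 p d : dle p d -> dle (p ^+ 2) (d + d).
Proof. by move=> h; rewrite expr2; apply: dle_mul. Qed.

Lemma dle_prod (f : nat -> {mpoly R[n]}) a b :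
  (forall j, dle (f j) 1) -> dle (\prod_(a <= j < b) f j) (b - a).
Proof.
move=> hf; elim: b => [|b IH].
  by rewrite big_geq // dle_1.
case: (leqP a b) => hab.
  rewrite big_nat_recr //=.
  apply: (@dle_mono _ ((b - a) + 1)); first lia.
  exact: dle_mul.
rewrite big_geq //; apply: (@dle_mono _ 0); [lia | exact: dle_1].
Qed.

Lemma tdeg_dle p r : dle p r -> (tdeg p <= r)%N.
Proof. rewrite /dle /tdeg; lia. Qed.

Lemma sos0 : is_sos (0 : {mpoly R[n]}).
Proof. by exists [::]; rewrite big_nil. Qed.

Lemma sos_sq q : is_sos (q ^+ 2).
Proof. by exists [:: q]; rewrite big_seq1. Qed.

Lemma sos_add p q : is_sos p -> is_sos q -> is_sos (p + q).
Proof.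
move=> [s1 ->] [s2 ->]; exists (s1 ++ s2); by rewrite big_cat.
Qed.

Lemma sos_sum (F : nat -> {mpoly R[n]}) a b :
  (forall i, is_sos (F i)) -> is_sos (\sum_(a <= i < b) F i).
Proof.
move=> hF; apply: (big_ind (fun p => is_sos p)) => //.
- exact: sos0.
- exact: sos_add.
Qed.

Lemma sos_half (h q : {mpoly R[n]}) : h * h + h * h = h -> is_sos (h * q ^+ 2).
Proof.
move=> H; have -> : h * q ^+ 2 = (h * q) ^+ 2 + (h * q) ^+ 2.
  by rewrite -{1}H; ring.
by apply: sos_add; apply: sos_sq.
Qed.

End Aux.
Arguments dle {R n}.

Lemma tele (S : comRingType) (f : nat -> S) a b : (a <= b)%N ->
  \sum_(a <= i < b) (\prod_(a <= j < i) f j) ^+ 2 * (1 - f i ^+ 2)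
  = 1 - (\prod_(a <= j < b) f j) ^+ 2.
Proof.
elim: b => [|b IH] hab.
  by rewrite !big_geq // expr1n subrr.
case: (leqP a b) => h.
  rewrite big_nat_recr //= IH // big_nat_recr //=; ring.
have -> : a = b.+1 by lia.
by rewrite !big_geq // expr1n subrr.
Qed.

Theorem lemma2 (R : realType) (n : nat) (hn : (0 < n)%N) :
  exists C : R, C <= 1 /\
    trunc_qmodule (2 * ((n + 1) %/ 2))%N
      (fun i : 'I_n => 'X_i * (1 - 'X_i))
      (\prod_(i < n) 'X_i + mpolyC n C).
Proof.
case: n hn => [//|n'] _.
set N := n'.+1.
set m := ((N + 1) %/ 2)%N.
have hmN : (m <= N)%N by rewrite /m /N; lia.
have hm1 : (1 <= m)%N by rewrite /m /N; lia.
have hNm : (N - m <= m)%N by rewrite /m /N; lia.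
pose x (k : nat) : {mpoly R[N]} := 'X_(inord k).
have dx : forall k, dle (x k) 1 by move=> k; apply: dle_X.
have d1x : forall k, dle (1 - x k) 1.
  by move=> k; apply: dle_add; [apply: (@dle_mono _ _ _ (0)) => //; apply: dle_1 | apply: dle_opp].
pose lo (k : nat) := if (k < m)%N then 0%N else m.
pose Q (k : nat) := \prod_(lo k <= j < k) x j.
have dQ : forall k, (k < N)%N -> dle (Q k) (m - 1).
  move=> k hk; apply: (@dle_mono _ _ _ (k - lo k)); last exact: dle_prod.
  rewrite /lo; case: ifP => ?; lia.
pose A := \prod_(0 <= j < m) x j.
pose B := \prod_(m <= j < N) x j.
pose h : {mpoly R[N]} := (2^-1 : R)%:MP_[N].
have H2 : h + h = 1.
  rewrite /h -rmorphD -mpolyC1; congr mpolyC.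
  have h2 : (2 : R) != 0 by rewrite pnatr_eq0.
  by field.
have Hh : h * h + h * h = h.
  rewrite /h -!rmorphM -rmorphD; congr mpolyC.
  have h2 : (2 : R) != 0 by rewrite pnatr_eq0.
  by field.
exists 1; split; first by [].
exists (h * (A + B) ^+ 2 + h * \sum_(0 <= k < N) (Q k * (1 - x k)) ^+ 2).
exists (fun i : 'I_N => Q i ^+ 2).
split.
- apply: sos_add; first exact: sos_half.
  rewrite mulr_sumr; apply: sos_sum => i; exact: sos_half.
- apply: tdeg_dle.
  have -> : (2 * m = 0 + (m + m))%N by lia.
  apply: dle_add; apply: dle_mul; try exact: dle_C.
    apply: dle_exp2; apply: dle_add.
      by apply: (@dle_mono _ _ _ (m - 0)); [lia | apply: dle_prod].
    by apply: (@dle_mono _ _ _ (N - m)); [lia | apply: dle_prod].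
  rewrite big_mkord; apply: (big_ind (fun p => dle p (m + m))).
  + by apply: (@dle_mono _ _ _ (0)); [lia | rewrite /dle msize0].
  + by move=> p q; apply: dle_add.
  + move=> k _; apply: dle_exp2.
    apply: (@dle_mono _ _ _ ((m - 1) + 1)); first lia.
    by apply: dle_mul => //; apply: dQ.
- by move=> i; apply: sos_sq.
- move=> i; apply: tdeg_dle.
  have -> : (2 * m = ((m - 1) + (m - 1)) + (1 + 1))%N by lia.
  apply: dle_mul; first by apply: dle_exp2; apply: dQ.
  apply: dle_mul; first exact: dle_X.
  apply: dle_add; [apply: (@dle_mono _ _ _ (0)) => //; apply: dle_1 | apply: dle_opp; apply: dle_X].
- have EP : \prod_(i < N) 'X_i = A * B.
    transitivity (\prod_(i < N) x i).
      by apply: eq_bigr => i _; rewrite /x inord_val.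
    by rewrite -(big_mkord xpredT x) (big_cat_nat (leq0n m) hmN).
  have ES : \sum_(i < N) Q i ^+ 2 * ('X_i * (1 - 'X_i))
      = \sum_(0 <= k < N) Q k ^+ 2 * (x k * (1 - x k)).
    rewrite big_mkord; apply: eq_bigr => i _; by rewrite /x inord_val.
  rewrite EP ES mpolyC1 /=.
  have EQ : h * \sum_(0 <= k < N) (Q k * (1 - x k)) ^+ 2
      + \sum_(0 <= k < N) Q k ^+ 2 * (x k * (1 - x k))
      = h * ((1 - A ^+ 2) + (1 - B ^+ 2)).
    rewrite mulr_sumr -big_split /=.
    rewrite (eq_bigr (fun k => h * (Q k ^+ 2 * (1 - x k ^+ 2)))); last first.
      move=> k _.
      have -> : Q k ^+ 2 * (x k * (1 - x k)) = (h + h) * (Q k ^+ 2 * (x k * (1 - x k))) by rewrite H2 mul1r.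
      ring.
    rewrite -mulr_sumr (big_cat_nat (leq0n m) hmN) /=.
    congr (h * (_ + _)).
      rewrite -(@tele _ x _ _ (leq0n m)); apply: eq_big_nat => k /andP[_ hk].
      by rewrite /Q /lo hk.
    rewrite -(@tele _ x _ _ hmN); apply: eq_big_nat => k /andP[hk _].
    by rewrite /Q /lo ltnNge hk.
  rewrite -addrA EQ.
  transitivity ((h + h) * (A * B + 1)); first by rewrite H2 mul1r.
  ring.
Qed.
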